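(* Let $g$ be an invertible measure preserving transformation of a probability space $(X,\nu)$ with no periodic points. Let $B\subset X$ be measurable with $\nu(B)=\nu_0>0$, and let $N:B\to\{1,2,3,\dots\}$ be a measurable function such that $\tilde g(x):=g^{N(x)}(x)\in B$ for almost every $x\in B$. Assume $$\int_B N(x)\,d\nu<\infty.$$ Then there is a measurable subset $B'\subset B$ such that: (1) $\nu(B')>0$, $\tilde g(B')=B'$, and $g_*=\tilde g|_{B'}$ is invertible and $\nu$-preserving; (2) $$\int_{B'}N(x)\,d\nu\ge \nu\Big(\bigcup_{j=-\infty}^{\infty}g^j(B)\Big).$$
   Context: Such a set $B'$ is called a kernel of $\tilde g$. *)

(* Defs.v *)
From HB Require Import structures.
From mathcomp Require Import all_boot all_order all_algebra.
From mathcomp Require Import all_classical all_reals all_analysis.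
Set Implicit Arguments. Unset Strict Implicit. Unset Printing Implicit Defensive.
Import Order.TTheory GRing.Theory Num.Theory.
Local Open Scope classical_set_scope.
Local Open Scope ring_scope.

(* The full orbit  \bigcup_{j in Z} g^j(B)  of a set B under an invertible map g
   with inverse ginv:  g^j = iter j g for j >= 0 and g^{-j} = iter j ginv. *)
Definition zorbit_set {T : Type} (g ginv : T -> T) (B : set T) : set T :=
  \bigcup_(n in [set: nat]) ((iter n g @` B) `|` (iter n ginv @` B)).

Definition induced_map {T : Type} (g : T -> T) (N : T -> nat) : T -> T :=
  fun x => iter (N x) g x.

(* Main.v *)
Require Import Defs.
From HB Require Import structures.
From mathcomp Require Import all_boot all_order all_algebra.
From mathcomp Require Import all_classical all_reals all_analysis.
From mathcomp Require Import measurable_realfun.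
From mathcomp Require Import zify.
Import Order.TTheory GRing.Theory Num.Theory.
Local Open Scope classical_set_scope.
Local Open Scope ring_scope.
Set Implicit Arguments.
Unset Strict Implicit.
Section Kernel.
Context (d : measure_display) (X : measurableType d) (R : realType)
  (nu : probability X R) (g ginv : X -> X)
  (hgK : cancel g ginv) (hginvK : cancel ginv g)
  (hgm : measurable_fun setT g) (hginvm : measurable_fun setT ginv)
  (hgpres : forall A, measurable A -> nu (g @^-1` A) = nu A)
  (hnoper : forall (x : X) (n : nat), (0 < n)%N -> iter n g x <> x)
  (B : set X) (hB : measurable B) (N : X -> nat)
  (hNpos : forall x, B x -> (0 < N x)%N)
  (hNm : measurable_fun B N).

Local Notation G := (induced_map g N).

Lemma iterK n x : iter n ginv (iter n g x) = x.
Proof. by elim: n => //= n IH; rewrite -iterS iterSr hgK. Qed.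

Lemma iterKV n x : iter n g (iter n ginv x) = x.
Proof. by elim: n => //= n IH; rewrite -iterS iterSr hginvK. Qed.

Lemma iter_ginv_g k n y : (k <= n)%N ->
  iter k ginv (iter n g y) = iter (n - k) g y.
Proof. by move=> kn; rewrite -{1}(subnKC kn) iterD iterK. Qed.

Lemma iter_ginv_g' k n y : (n <= k)%N ->
  iter k ginv (iter n g y) = iter (k - n) ginv y.
Proof. by move=> nk; rewrite -{1}(subnK nk) iterD iterK. Qed.

Lemma iter_g_ginv k n y : (k <= n)%N ->
  iter k g (iter n ginv y) = iter (n - k) ginv y.
Proof. by move=> kn; rewrite -{1}(subnKC kn) iterD iterKV. Qed.

Lemma iter_g_ginv' k n y : (n <= k)%N ->
  iter k g (iter n ginv y) = iter (k - n) g y.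
Proof. by move=> nk; rewrite -{1}(subnK nk) iterD iterKV. Qed.

Lemma mpre_g A : measurable A -> measurable (g @^-1` A).
Proof. by move=> mA; have := hgm measurableT mA; rewrite setTI. Qed.

Lemma mpre_ginv A : measurable A -> measurable (ginv @^-1` A).
Proof. by move=> mA; have := hginvm measurableT mA; rewrite setTI. Qed.

Lemma mpre_iter_g n A : measurable A -> measurable (iter n g @^-1` A).
Proof.
elim: n A => // n IH A mA.
have -> : iter n.+1 g @^-1` A = iter n g @^-1` (g @^-1` A) by [].
exact/IH/mpre_g.
Qed.

Lemma mpre_iter_ginv n A : measurable A -> measurable (iter n ginv @^-1` A).
Proof.
elim: n A => // n IH A mA.
have -> : iter n.+1 ginv @^-1` A = iter n ginv @^-1` (ginv @^-1` A) by [].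
exact/IH/mpre_ginv.
Qed.

Lemma pres_ginv A : measurable A -> nu (ginv @^-1` A) = nu A.
Proof.
move=> mA; rewrite -hgpres; last exact: mpre_ginv.
by rewrite (_ : g @^-1` (ginv @^-1` A) = A)//; apply/funext => x /=; rewrite hgK.
Qed.

Lemma pres_iter_g n A : measurable A -> nu (iter n g @^-1` A) = nu A.
Proof.
elim: n A => // n IH A mA.
have -> : iter n.+1 g @^-1` A = iter n g @^-1` (g @^-1` A) by [].
rewrite IH; last exact: mpre_g.
exact: hgpres.
Qed.

Lemma pres_iter_ginv n A : measurable A -> nu (iter n ginv @^-1` A) = nu A.
Proof.
elim: n A => // n IH A mA.
have -> : iter n.+1 ginv @^-1` A = iter n ginv @^-1` (ginv @^-1` A) by [].
rewrite IH; last exact: mpre_ginv.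
exact: pres_ginv.
Qed.

Lemma img_iter_g n A : iter n g @` A = iter n ginv @^-1` A.
Proof.
apply/seteqP; split => x /=.
  by move=> [y Ay <-]; rewrite iterK.
by move=> Ax; exists (iter n ginv x) => //; rewrite iterKV.
Qed.


Definition Bn n := B `&` N @^-1` [set n].
Definition Bgt j := B `&` N @^-1` [set k | (j < k)%N].

Lemma mBn n : measurable (Bn n).
Proof. by apply: hNm. Qed.

Lemma mBgt n : measurable (Bgt n).
Proof. by apply: hNm. Qed.

Lemma pre_ginv_negl n A : nu.-negligible A -> nu.-negligible (iter n ginv @^-1` A).
Proof.
move=> [C [mC C0 AC]]; exists (iter n ginv @^-1` C); split.
- exact: mpre_iter_ginv.
- by rewrite pres_iter_ginv.
- by move=> x /= /AC.
Qed.

Lemma pre_g_negl n A : nu.-negligible A -> nu.-negligible (iter n g @^-1` A).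
Proof.
move=> [C [mC C0 AC]]; exists (iter n g @^-1` C); split.
- exact: mpre_iter_g.
- by rewrite pres_iter_g.
- by move=> x /= /AC.
Qed.

Lemma Gpre_eq A C : A `<=` B ->
  A `&` G @^-1` C = \bigcup_n (A `&` Bn n `&` iter n g @^-1` C).
Proof.
move=> AB; apply/seteqP; split => x /=.
- move=> [Ax GC]; exists (N x) => //; split => //; split => //; split => //.
  exact: AB.
- by move=> [n _ [[Ax [Bx /= Nx]] Cx]]; split => //; rewrite /induced_map Nx.
Qed.

Lemma mGpre A C : measurable A -> A `<=` B -> measurable C ->
  measurable (A `&` G @^-1` C).
Proof.
move=> mA AB mC; rewrite Gpre_eq //; apply: bigcupT_measurable => n.
apply: measurableI; first (apply: measurableI => //; exact: mBn).
exact: mpre_iter_g.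
Qed.

Lemma Gimg_eq A : A `<=` B ->
  G @` A = \bigcup_n (iter n ginv @^-1` (A `&` Bn n)).
Proof.
move=> AB; apply/seteqP; split => y /=.
- move=> [x Ax <-]; exists (N x) => //=; rewrite /induced_map iterK.
  by split => //; split => //; exact: AB.
- move=> [n _ /= [Ay [By Ny]]]; exists (iter n ginv y) => //.
  by rewrite /induced_map Ny iterKV.
Qed.

Lemma mGimg A : measurable A -> A `<=` B -> measurable (G @` A).
Proof.
move=> mA AB; rewrite Gimg_eq //; apply: bigcupT_measurable => n.
apply: mpre_iter_ginv; apply: measurableI => //; exact: mBn.
Qed.

Lemma split_Bn A : A `<=` B -> A = \bigcup_n (A `&` Bn n).
Proof.
move=> AB; apply/seteqP; split => x /=.
- by move=> Ax; exists (N x) => //; split => //; split => //; exact: AB.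
- by move=> [n _ [Ax _]].
Qed.

Lemma triv_Bn A : trivIset setT (fun n => A `&` Bn n).
Proof. by move=> i j _ _ [x [[_ [_ Ni]] [_ [_ Nj]]]]; rewrite -Ni -Nj. Qed.

Lemma measure_split_Bn A : measurable A -> A `<=` B ->
  nu A = (\sum_(n <oo) nu (A `&` Bn n))%E.
Proof.
move=> mA AB; rewrite {1}(split_Bn AB) measure_semi_bigcup //.
- by move=> n; apply: measurableI => //; exact: mBn.
- exact: triv_Bn.
- by rewrite -split_Bn.
Qed.

Lemma Gimg_le A : measurable A -> A `<=` B -> (nu (G @` A) <= nu A)%E.
Proof.
move=> mA AB.
have mF n : measurable (iter n ginv @^-1` (A `&` Bn n)).
  by apply: mpre_iter_ginv; apply: measurableI => //; exact: mBn.
rewrite Gimg_eq//.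
apply: (le_trans (measure_sigma_subadditive _ mF _ _)).
- exact: bigcupT_measurable.
- by [].
rewrite (measure_split_Bn mA AB); apply: lee_nneseries => // n _.
rewrite /= pres_iter_ginv //; apply: measurableI => //; exact: mBn.
Qed.

Lemma Gpre_negl C : nu.-negligible C -> nu.-negligible (B `&` G @^-1` C).
Proof.
move=> [C' [mC' C'0 CC']].
apply: (negligibleS (A := \bigcup_n (iter n g @^-1` C'))).
- by move=> x [Bx /CC' GC]; exists (N x).
- apply: negligible_bigcup => n; exists (iter n g @^-1` C'); split => //.
  + exact: mpre_iter_g.
  + by rewrite /= pres_iter_g.
Qed.


Section B0sec.
Context (hret : {ae nu, forall x, B x -> B (induced_map g N x)}).

Definition B0 := [set x | forall k, B (iter k G x)].

Fixpoint E k := if k is k'.+1 then B `&` G @^-1` (E k') else B.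

Lemma E_iff k x : E k x <-> (forall i, (i <= k)%N -> B (iter i G x)).
Proof.
elim: k x => [|k IH] x /=.
  split; first by move=> Bx [|i].
  by move=> H; exact: (H 0%N).
split.
- move=> [Bx /IH H] [|i] hi //=.
  by rewrite -iterS iterSr; apply: H.
- move=> H; split; first exact: (H 0%N).
  by apply/IH => i hi; rewrite -iterSr; exact: H.
Qed.

Lemma mE k : measurable (E k).
Proof. elim: k => [|k IH] //=; exact: mGpre. Qed.

Lemma B0_eq : B0 = \bigcap_k E k.
Proof.
apply/seteqP; split => x /=.
- by move=> H k _; apply/E_iff => i _.
- by move=> H k; have /E_iff := H k I; apply.
Qed.

Lemma mB0 : measurable B0.
Proof. by rewrite B0_eq; apply: bigcapT_measurable => k; exact: mE. Qed.

Lemma B0_sub : B0 `<=` B.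
Proof. by move=> x H; exact: (H 0%N). Qed.

Lemma B0_G x : B0 x -> B0 (G x).
Proof. by move=> H k; rewrite -iterSr; exact: H. Qed.

Lemma B0_iter s x : B0 x -> B0 (iter s G x).
Proof. by elim: s => // s IH /IH; rewrite iterS; exact: B0_G. Qed.

Lemma E_negl k : nu.-negligible (E k `\` E k.+1).
Proof.
elim: k => [|k IH].
  case: hret => N0 [mN0 N00 N0sub]; exists N0; split => //.
  move=> x /= [Bx H]; apply: N0sub => /= H'; apply: H; split => //.
  exact: H'.
apply: negligibleS (Gpre_negl IH).
move=> x /= [[Bx Ek] H]; split => //; split => // H'; apply: H; split => //.
Qed.

Lemma BB0_negl : nu.-negligible (B `\` B0).
Proof.
apply: (negligibleS (A := \bigcup_k (E k `\` E k.+1))); last first.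
  by apply: negligible_bigcup => k; exact: E_negl.
move=> x [Bx nB0].
have [k /not_implyP[Ek nEk]] : exists k, ~ (E k x -> E k.+1 x).
  apply/existsNP => H; apply: nB0; rewrite B0_eq => k _.
  by elim: k => // k IHk; exact: H.
by exists k.
Qed.

End B0sec.


Definition Bk k := [set y | exists2 x, B0 x & iter k G x = y].

Lemma Bk_S k : Bk k.+1 = G @` Bk k.
Proof.
apply/seteqP; split => y /=.
- by move=> [x B0x <-]; exists (iter k G x) => //; exists x.
- by move=> [z [x B0x <-] <-]; exists x.
Qed.

Lemma Bk_sub0 k : Bk k `<=` B0.
Proof. by move=> y [x /(B0_iter k) B0x <-]. Qed.

Lemma Bk_sub k : Bk k `<=` B.
Proof. by move=> y /Bk_sub0 /B0_sub. Qed.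

Lemma mBk k : measurable (Bk k).
Proof.
elim: k => [|k IH].
  rewrite (_ : Bk 0 = B0); first exact: mB0.
  by apply/seteqP; split => y /=; [move=> [x ? <-]|move=> ?; exists y].
by rewrite Bk_S; apply: mGimg => //; exact: Bk_sub.
Qed.

Lemma Bk_dec k : Bk k.+1 `<=` Bk k.
Proof. by move=> y [x B0x <-]; exists (G x); [exact: B0_G | rewrite iterSr]. Qed.

Lemma Bk_mono k l : (k <= l)%N -> Bk l `<=` Bk k.
Proof.
move=> kl; rewrite -(subnKC kl); elim: (l - k)%N => [|m IH]; first by rewrite addn0.
by rewrite addnS; apply: subset_trans IH; exact: Bk_dec.
Qed.

Lemma Bk_G k y : Bk k y -> Bk k.+1 (G y).
Proof. by move=> [x B0x <-]; exists x => //; rewrite iterS. Qed.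

Definition Bp := \bigcap_k Bk k.

Lemma mBp : measurable Bp.
Proof. by apply: bigcapT_measurable => k; exact: mBk. Qed.

Lemma Bp_sub : Bp `<=` B.
Proof. by move=> y H; exact: (Bk_sub (H 0%N I)). Qed.

Lemma Bp_G y : Bp y -> Bp (G y).
Proof. by move=> H k _; apply: Bk_dec; apply: Bk_G; exact: H. Qed.

Definition orbit (S : set X) :=
  [set z | exists j k, S (iter j g (iter k ginv z))].

Lemma orbit_eq S :
  orbit S = \bigcup_k \bigcup_j (iter k ginv @^-1` (iter j g @^-1` S)).
Proof.
apply/seteqP; split => z /=.
- by move=> [j [k H]]; exists k => //; exists j.
- by move=> [k _ [j _ H]]; exists j, k.
Qed.

Lemma morbit S : measurable S -> measurable (orbit S).
Proof.
move=> mS; rewrite orbit_eq; apply: bigcupT_measurable => k.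
apply: bigcupT_measurable => j; apply: mpre_iter_ginv; exact: mpre_iter_g.
Qed.

Lemma orbit_negl S : nu.-negligible S -> nu.-negligible (orbit S).
Proof.
move=> nS; rewrite orbit_eq; apply: negligible_bigcup => k.
apply: negligible_bigcup => j; apply: pre_ginv_negl; exact: pre_g_negl.
Qed.

Lemma orbit_self S z : S z -> orbit S z.
Proof. by move=> Sz; exists 0%N, 0%N. Qed.

Lemma orbit_ginv S n z : orbit S (iter n ginv z) <-> orbit S z.
Proof.
split.
- by move=> [j [k H]]; exists j, (k + n)%N; rewrite iterD.
- move=> [j [k H]]; exists (j + n)%N, k.
  have -> : iter k ginv (iter n ginv z) = iter n ginv (iter k ginv z).
    by rewrite -!iterD addnC.
  by rewrite iterD iterKV.
Qed.

Lemma orbit_g S n z : orbit S (iter n g z) <-> orbit S z.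
Proof.
split.
- move=> [j [k H]]; have [kn|nk] := leqP k n.
    by exists (j + (n - k))%N, 0%N; rewrite /= iterD -iter_ginv_g.
  by exists j, (k - n)%N; rewrite -iter_ginv_g' // ltnW.
- by move=> [j [k H]]; exists j, (k + n)%N; rewrite iterD iterK.
Qed.

Lemma orbit_G S y : orbit S (G y) <-> orbit S y.
Proof. exact: orbit_g. Qed.


Lemma series_indic x : B x ->
  (\sum_(k <oo) (\1_(Bgt k) x)%:E = ((N x)%:R : R)%:E)%E.
Proof.
move=> Bx.
rewrite (nneseries_split 0 (N x)); last by move=> k _; rewrite lee_fin.
rewrite eseries0 ?adde0; last first.
  move=> i /= hi _; rewrite indicE memNset //= => -[_ /= ltiN].
  by move: hi; rewrite leqNgt add0n ltiN.
rewrite add0n sumEFin; congr (_%:E).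
rewrite (@eq_big_nat _ _ _ 0 (N x) _ (fun _ => 1)).
  by rewrite sumr_const_nat subn0.
move=> i /andP[_ ltiN]; rewrite indicE mem_set //.
Qed.

Lemma sum_Bgt_int A : measurable A -> A `<=` B ->
  (\sum_(k <oo) nu (Bgt k `&` A) = \int[nu]_(x in A) ((N x)%:R : R)%:E)%E.
Proof.
move=> mA AB.
transitivity (\sum_(k <oo) \int[nu]_(x in A) (\1_(Bgt k) x)%:E)%E.
  by apply: eq_eseriesr => k _; rewrite integral_indic //; exact: mBgt.
rewrite -integral_nneseries //.
- by apply: eq_integral => x /[!inE] Ax; exact: series_indic (AB x Ax).
- by move=> n; apply/measurable_EFinP; apply: measurable_indic; exact: mBgt.
Qed.


Lemma real_bound0 (r : R) : 0 <= r -> (forall n, r *+ n <= 1) -> r = 0.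
Proof.
move=> r0 Hn; apply/eqP; rewrite eq_le r0 andbT leNgt; apply/negP => rgt0.
have := Num.Theory.truncnS_gt (r^-1); set n := (Num.truncn _).+1 => h.
have Hle := Hn n; rewrite -mulr_natr in Hle.
have : r * r^-1 < r * n%:R by rewrite ltr_pM2l.
rewrite mulfV ?gt_eqF// => /lt_le_trans/(_ Hle); by rewrite ltxx.
Qed.

Definition W0 := [set b | B0 b /\ forall m, (0 < m)%N -> ~ B0 (iter m ginv b)].

Lemma mW0 : measurable W0.
Proof.
rewrite (_ : W0 = B0 `&` \bigcap_m
   (if (0 < m)%N then ~` (iter m ginv @^-1` B0) else setT)).
  apply: measurableI; first exact: mB0.
  apply: bigcapT_measurable => m; case: ifP => _ //.
  by apply: measurableC; apply: mpre_iter_ginv; exact: mB0.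
apply/seteqP; split => x /=.
- by move=> [B0x H]; split => // m _; case: ifP => // m0; exact: H.
- move=> [B0x H]; split => // m m0; have := H m I; by rewrite m0.
Qed.

Lemma W0_key k l x : (k < l)%N -> W0 (iter k ginv x) -> W0 (iter l ginv x) -> False.
Proof.
move=> kl [_ H] [H' _]; apply: (H (l - k)%N); first by rewrite subn_gt0.
by rewrite -iterD subnK // ltnW.
Qed.

Lemma W0_negl : nu.-negligible W0.
Proof.
suff h : nu W0 = 0 by exists W0; split => //; exact: mW0.
pose F k := iter k ginv @^-1` W0.
have mF k : measurable (F k) by apply: mpre_iter_ginv; exact: mW0.
have tF : trivIset setT F.
  move=> i j _ _ [x [Fi Fj]]; have [ij|ji|//] := ltngtP i j.
  - by case: (W0_key ij Fi Fj).
  - by case: (W0_key ji Fj Fi).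
have hU : (\sum_(k <oo) nu (F k) <= 1)%E.
  rewrite -measure_semi_bigcup//; last exact: bigcupT_measurable.
  by apply: probability_le1; exact: bigcupT_measurable.
have hF k : nu (F k) = nu W0 by rewrite /F pres_iter_ginv //; exact: mW0.
have W00 : (0 <= nu W0)%E := measure_ge0 _ _.
have W0fin : nu W0 \is a fin_num.
  rewrite ge0_fin_numE // (le_lt_trans (probability_le1 _ mW0)) //.
  by rewrite ltry.
rewrite -(fineK W0fin); congr (_%:E); apply: real_bound0.
  by rewrite -lee_fin fineK.
move=> n; rewrite -lee_fin; apply: le_trans hU.
apply: le_trans (nneseries_lim_ge n _); last by move=> k _ _.
rewrite (eq_bigr (fun _ => (fine (nu W0))%:E)); last first.
  by move=> k _; rewrite hF fineK.
by rewrite sumEFin sumr_const_nat subn0.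
Qed.

Section Lsupsec.
Context (hint : (\int[nu]_(x in B) ((N x)%:R : R)%:E < +oo)%E).

Definition Lsup := \bigcap_L \bigcup_(i in [set i | (L <= i)%N])
  (iter i ginv @^-1` Bgt i).

Lemma Lsup_negl : nu.-negligible Lsup.
Proof.
pose F i := iter i ginv @^-1` Bgt i.
have mF i : measurable (F i) by apply: mpre_iter_ginv; exact: mBgt.
have mL : measurable Lsup.
  apply: bigcapT_measurable => L; apply: bigcup_measurable => i _; exact: mF.
suff h : nu Lsup = 0 by exists Lsup; split.
have Fsum : (\sum_(0 <= k <oo) nu (F k) < +oo)%E.
  rewrite (eq_eseriesr (g := fun k => nu (Bgt k `&` B))).
    by rewrite sum_Bgt_int.
  move=> k _; rewrite /F pres_iter_ginv; last exact: mBgt.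
  by rewrite setIidl // => x [].
have tail := nneseries_tail_cvg Fsum (fun k _ => measure_ge0 nu (F k)).
apply/eqP; rewrite -measure_le0.
rewrite -(cvg_lim _ tail) //.
apply: lime_ge; first exact: (cvgP _ tail).
apply: nearW => L.
apply: measure_sigma_subadditive_tail => //.
move=> z Lz; have [i /= Li Fi] := Lz L I; exists i => //=.
by apply/negP; rewrite -leqNgt.
Qed.

End Lsupsec.


Lemma timeG s x : B0 x -> exists t, iter s G x = iter t g x /\ (s <= t)%N.
Proof.
move=> B0x; elim: s => [|s [t [IH st]]]; first by exists 0%N.
have By : B (iter s G x) by apply: B0_sub; exact: B0_iter.
exists (N (iter s G x) + t)%N; split.
  by rewrite iterS iterD -IH.
by rewrite -addn1 addnC leq_add // hNpos.
Qed.

Lemma cross j z b : B0 b -> iter j ginv z = b ->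
  exists s i, [/\ (i <= j)%N, iter s G b = iter i ginv z &
                  (i < N (iter s G b))%N].
Proof.
elim/ltn_ind: j b => j IH b B0b bE.
have [jN|Nj] := ltnP j (N b); first by exists 0%N, j; split; rewrite ?bE.
have Nb0 : (0 < N b)%N by apply: hNpos; exact: B0_sub.
have GbE : iter (j - N b) ginv z = G b.
  have -> : G b = iter (N b) g (iter j ginv z) by rewrite bE.
  by rewrite iter_g_ginv.
have [|s [i [ij H1 H2]]] := IH (j - N b)%N _ (G b) (B0_G B0b) GbE.
  by rewrite ltn_subrL Nb0 (leq_trans Nb0 Nj).
exists s.+1, i; split.
- by apply: leq_trans ij _; exact: leq_subr.
- by rewrite iterSr.
- by rewrite iterSr.
Qed.

Lemma noLsup_bound w : ~ Lsup w ->
  exists M, forall i, B (iter i ginv w) -> (i < N (iter i ginv w))%N -> (i < M)%N.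
Proof.
move=> nL.
have [L HL] : exists L, ~ (\bigcup_(i in [set i | (L <= i)%N])
    (iter i ginv @^-1` Bgt i)) w.
  by apply/existsNP => H; apply: nL => L _; exact: H.
exists L => i Bi iN; rewrite ltnNge; apply/negP => Li; apply: HL.
by exists i => //; split.
Qed.

Lemma bound_fin (A : nat) (Q : nat -> nat -> Prop) :
  (forall a, (a < A)%N -> exists L, forall j, Q a j -> (j < L)%N) ->
  exists L, forall a j, (a < A)%N -> Q a j -> (j < L)%N.
Proof.
elim: A => [|A IH] H; first by exists 0%N.
have [L1 H1] := IH (fun a aA => H a (ltnW aA)).
have [L2 H2] := H A (ltnSn A).
exists (maxn L1 L2) => a j; rewrite ltnS leq_eqVlt => /orP[/eqP -> |aA] Qj.
  by apply: leq_trans (H2 _ Qj) _; exact: leq_maxr.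
by apply: leq_trans (H1 _ _ aA Qj) _; exact: leq_maxl.
Qed.

Lemma noLsup_orbit w c : ~ orbit Lsup w -> ~ Lsup (iter c ginv w).
Proof. by move=> H L; apply: H; apply/(orbit_ginv _ c); exact: orbit_self. Qed.

Lemma Fbound s w : ~ orbit Lsup w ->
  exists L, forall j, B0 (iter j ginv w) -> iter s G (iter j ginv w) = w ->
    (j < L)%N.
Proof.
move=> nOw; elim: s => [|s [Ls IH]].
  exists 1%N => -[|j] _ //= Hj; exfalso.
  apply: (hnoper (x := w) (n := j.+1)) => //.
  by rewrite -{1}Hj iterKV.
have HMc : forall c, (c < Ls.+1)%N -> exists M, forall i,
    (B (iter i ginv (iter c ginv w)) /\
     (i < N (iter i ginv (iter c ginv w)))%N) -> (i < M)%N.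
  move=> c _; have [M HM] := noLsup_bound (noLsup_orbit (c := c) nOw).
  by exists M => i [H1 H2]; exact: HM.
have [M HM] := bound_fin HMc.
exists (Ls + M).+1 => j B0b Hs.
set b := iter j ginv w in B0b Hs.
have Bb : B b by exact: B0_sub.
have Nb0 : (0 < N b)%N by exact: hNpos.
rewrite iterSr in Hs.
have [Nj|jN] := leqP (N b) j; last first.
  have GbE : G b = iter (N b - j) g w by rewrite /induced_map /b iter_g_ginv' // ltnW.
  have [t [Ht _]] := timeG s (B0_G B0b).
  exfalso; apply: (hnoper (x := w) (n := (t + (N b - j))%N)).
    by rewrite addn_gt0 subn_gt0 jN orbT.
  by rewrite iterD -GbE -Ht.
have GbE : G b = iter (j - N b) ginv w by rewrite /induced_map /b iter_g_ginv.
have jL : (j - N b < Ls)%N by apply: IH; rewrite -GbE //; exact: B0_G.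
have : ((N b).-1 < M)%N.
  apply: (HM (j - N b).+1); first by rewrite ltnS.
  rewrite -iterD (_ : ((N b).-1 + (j - N b).+1 = j)%N); first by split => //; rewrite prednK.
  by lia.
move=> NM; lia.
Qed.


Lemma unif_neg (M : nat) (P : nat -> nat -> Prop) :
  (forall i k l, (k <= l)%N -> P i l -> P i k) ->
  (forall i, (i < M)%N -> exists k, ~ P i k) ->
  exists K, forall i, (i < M)%N -> ~ P i K.
Proof.
move=> mono; elim: M => [|M IH] H; first by exists 0%N.
have [K1 H1] := IH (fun i iM => H i (ltnW iM)).
have [K2 H2] := H M (ltnSn M).
exists (maxn K1 K2) => i; rewrite ltnS leq_eqVlt => /orP[/eqP -> |iM] HP.
  by apply: H2; apply: mono HP; exact: leq_maxr.
by apply: (H1 i iM); apply: mono HP; exact: leq_maxl.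
Qed.

Lemma pigeon (M : nat) (P : nat -> nat -> Prop) :
  (forall i k l, (k <= l)%N -> P i l -> P i k) ->
  (forall k, exists i, (i < M)%N /\ P i k) ->
  exists i, (i < M)%N /\ forall k, P i k.
Proof.
move=> mono H; apply: contrapT => nH.
have : forall i, (i < M)%N -> exists k, ~ P i k.
  move=> i iM; apply/existsNP => Hk; apply: nH; by exists i.
move/(unif_neg mono) => [K HK].
have [i [iM Pi]] := H K; exact: HK i iM Pi.
Qed.

Lemma surjK y : Bp y -> ~ orbit Lsup y ->
  exists x, [/\ Bp x, G x = y & x = iter (N x) ginv y].
Proof.
move=> Bpy nOy.
have [M HM] := noLsup_bound (noLsup_orbit (c := 1%N) nOy).
pose P n k := Bk k (iter n ginv y) /\ N (iter n ginv y) = n.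
have mono : forall i k l, (k <= l)%N -> P i l -> P i k.
  by move=> i k l kl [H1 H2]; split => //; exact: Bk_mono kl _ H1.
have [|n [_ Pn]] := @pigeon M.+1 P mono.
  move=> k; have : Bk k.+1 y by exact: Bpy.
  rewrite Bk_S => -[x Bkx Gx].
  have xE : x = iter (N x) ginv y by rewrite -Gx /induced_map iterK.
  have Bx : B x by exact: Bk_sub Bkx.
  have Nx0 : (0 < N x)%N by exact: hNpos.
  exists (N x); split; last by rewrite /P -xE.
  have : ((N x).-1 < M)%N.
    apply: HM; rewrite -iterD addn1 prednK // -xE //.
  by rewrite -(prednK Nx0) ltnS.
exists (iter n ginv y); split.
- by move=> k _; have [] := Pn k.
- by rewrite /induced_map; have [_ ->] := Pn 0%N; rewrite iterKV.
- by have [_ ->] := Pn 0%N.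
Qed.

Lemma visits z : zorbit_set g ginv B z -> ~ orbit (B `\` B0) z ->
  ~ orbit W0 z -> forall L, exists j, (L <= j)%N /\ B0 (iter j ginv z).
Proof.
move=> Oz nO1 nO2 L; apply: contrapT => nH.
have nV : forall j, (L <= j)%N -> ~ B0 (iter j ginv z).
  by move=> j Lj Bj; apply: nH; exists j.
pose u := iter L ginv z.
have [a B0a] : exists a, B0 (iter a g u).
  case: Oz => n _ [[b Bb bz]|[b Bb bz]].
  - have B0b : B0 b.
      apply: contrapT => nb; apply: nO1; rewrite -bz.
      by apply/orbit_g; exact: orbit_self.
    have nL : (n < L)%N.
      rewrite ltnNge; apply/negP => Ln; apply: (nV n Ln).
      by rewrite -bz iterK.
    exists (L - n)%N; rewrite /u iter_g_ginv; last exact: leq_subr.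
    rewrite subKn; last exact: ltnW.
    by rewrite -bz iterK.
  - have B0b : B0 b.
      apply: contrapT => nb; apply: nO1; rewrite -bz.
      by apply/orbit_ginv; exact: orbit_self.
    exists (n + L)%N; rewrite /u iter_g_ginv'; last exact: leq_addl.
    by rewrite addnK -bz iterKV.
suff [a' Wa'] : exists a', W0 (iter a' g u).
  by apply: nO2; exists a', L.
elim/ltn_ind: a B0a => a IH B0a.
have [[m [m0 Bm]]|nm] := pselect (exists m, (0 < m)%N /\ B0 (iter m ginv (iter a g u))).
  have [ma|am] := leqP m a.
    apply: (IH (a - m)%N); first by lia.
    by rewrite -iter_ginv_g.
  exfalso; apply: (nV (m - a + L)%N); first exact: leq_addl.
  by rewrite iterD -/u -iter_ginv_g' // ltnW.
exists a; split => // m m0 Bm; apply: nm; by exists m.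
Qed.

Lemma cover z : zorbit_set g ginv B z -> ~ orbit (B `\` B0) z ->
  ~ orbit W0 z -> ~ orbit Lsup z ->
  exists i, Bp (iter i ginv z) /\ (i < N (iter i ginv z))%N.
Proof.
move=> Oz nO1 nO2 nO3.
have [M HM] := noLsup_bound (noLsup_orbit (c := 0%N) nO3).
pose P i k := Bk k (iter i ginv z) /\ (i < N (iter i ginv z))%N.
have mono : forall i k l, (k <= l)%N -> P i l -> P i k.
  by move=> i k l kl [H1 H2]; split => //; exact: Bk_mono kl _ H1.
have [|i [_ Pi]] := @pigeon M P mono; last first.
  exists i; split; last by have [] := Pi 0%N.
  by move=> k _; have [] := Pi k.
move=> k.
have HL : forall s, (s < k)%N -> exists L, forall j,
    (exists i, [/\ (i < M)%N, B0 (iter j ginv (iter i ginv z)) &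
       iter s G (iter j ginv (iter i ginv z)) = iter i ginv z]) -> (j < L)%N.
  move=> s _.
  have HLi : forall i, (i < M)%N -> exists L, forall j,
      (B0 (iter j ginv (iter i ginv z)) /\
       iter s G (iter j ginv (iter i ginv z)) = iter i ginv z) -> (j < L)%N.
    move=> i _; have [L HL] := Fbound s (w := iter i ginv z)
      (fun H => nO3 (proj1 (orbit_ginv _ _ _) H)).
    by exists L => j [H1 H2]; exact: HL.
  have [L HL] := bound_fin HLi.
  by exists L => j [i [iM H1 H2]]; apply: (HL i).
have [L HL'] := bound_fin HL.
have [j [Lj B0j]] := visits Oz nO1 nO2 (L + M).
have [s [i [ij H1 H2]]] := cross B0j erefl.
have B0s : B0 (iter s G (iter j ginv z)) by exact: B0_iter.
have iM : (i < M)%N.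
  apply: HM; rewrite /= -H1 //; exact: B0_sub.
exists i; split => //.
have [ks|sk] := leqP k s.
  split; last by rewrite -H1.
  exists (iter (s - k) G (iter j ginv z)); first exact: B0_iter.
  by rewrite -iterD subnKC.
exfalso.
have : (j - i < L)%N.
  apply: (HL' s) => //; exists i; split => //.
  - by rewrite -iterD subnK.
  - by rewrite -iterD subnK.
lia.
Qed.


Lemma orbit_mono S S' : S `<=` S' -> orbit S `<=` orbit S'.
Proof. by move=> SS z [j [k H]]; exists j, k; exact: SS. Qed.

Lemma fin_nu A : measurable A -> (nu A \is a fin_num)%E.
Proof.
move=> mA; rewrite ge0_fin_numE ?measure_ge0//.
by apply: (le_lt_trans (probability_le1 _ mA)); rewrite ltry.
Qed.

Section Final.
Context (S : set X) (mS : measurable S) (S0 : nu S = 0)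
  (sub1 : B `\` B0 `<=` S) (sub2 : W0 `<=` S) (sub3 : Lsup `<=` S).

Definition Kset := Bp `\` orbit S.

Lemma mK : measurable Kset.
Proof. apply: measurableD; [exact: mBp | exact: morbit]. Qed.

Lemma K_sub : Kset `<=` B.
Proof. by move=> x [/Bp_sub]. Qed.

Lemma K_G x : Kset x -> Kset (G x).
Proof. by move=> [Bx nO]; split; [exact: Bp_G | move/orbit_G]. Qed.

Lemma K_surj y : Kset y -> exists x, [/\ Kset x, G x = y & x = iter (N x) ginv y].
Proof.
move=> [Bpy nO].
have [x [Bpx Gx xE]] := surjK Bpy (fun H => nO (orbit_mono sub3 H)).
exists x; split => //; split => // H; apply: nO.
by move: H; rewrite xE => /orbit_ginv.
Qed.

Definition Ynm n m := Kset `&` Bn m `&`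
  iter m g @^-1` (iter n ginv @^-1` (Kset `&` Bn n)).

Lemma mYnm n m : measurable (Ynm n m).
Proof.
apply: measurableI; first (apply: measurableI; [exact: mK | exact: mBn]).
apply: mpre_iter_g; apply: mpre_iter_ginv; apply: measurableI; [exact: mK|exact: mBn].
Qed.

Lemma Ynm_null n m : n != m -> nu (Ynm n m) = 0.
Proof.
move=> nm.
pose K' := Kset `\` Ynm n m.
have mK' : measurable K' by apply: measurableD; [exact: mK | exact: mYnm].
have KK' : Kset `<=` G @` K'.
  move=> y Ky; have [x [Kx Gx xE]] := K_surj Ky.
  have [Yx|nYx] := pselect (Ynm n m x); last by exists x.
  case: Yx => -[_ [_ /= Nx]] [/= Kx'' [_ /= Nx'']].
  have yE : y = iter m g x by rewrite -Gx /induced_map Nx.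
  exists (iter n ginv y); rewrite yE.
    split => // -[[_ [_ /= Nm]] _].
    by move: Nx''; rewrite Nm => Nmn; rewrite Nmn eqxx in nm.
  by rewrite /induced_map Nx'' iterKV.
have le1 : (nu Kset <= nu K')%E.
  apply: le_trans (Gimg_le mK' _); last by move=> x [/K_sub].
  by apply: le_measure; rewrite ?inE //; [exact: mK | apply: mGimg => //; move=> x [/K_sub]].
have KU : Kset = K' `|` Ynm n m.
  apply/seteqP; split => x.
  - by move=> Kx; have [Yx|nYx] := pselect (Ynm n m x); [right|left].
  - by move=> [[]|[[]]].
have hU : nu Kset = (nu K' + nu (Ynm n m))%E.
  rewrite {1}KU measureU //; first exact: mYnm.
  by apply/seteqP; split => x // -[[_ + ]].
move: le1; rewrite hU.
have fK' := fin_nu mK'.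
have fY := fin_nu (mYnm n m).
have Y0 : (0 <= nu (Ynm n m))%E := measure_ge0 _ _.
rewrite -(fineK fK') -(fineK fY) -EFinD lee_fin => hle.
apply/eqP; rewrite -(fineK fY) eqe; move: Y0; rewrite -(fineK fY) lee_fin.
move=> Y0'; apply/eqP; apply: le_anti; rewrite Y0' andbT.
by rewrite -(lerD2l (fine (nu K'))) addr0.
Qed.


Definition Yset := \bigcup_n \bigcup_m (if n == m then set0 else Ynm n m).

Lemma Y_negl : nu.-negligible Yset.
Proof.
apply: negligible_bigcup => n; apply: negligible_bigcup => m.
case: eqP => [_|/eqP nm]; first exact: negligible_set0.
by exists (Ynm n m); split => //; [exact: mYnm | exact: Ynm_null].
Qed.

Section Final2.
Context (Y' : set X) (mY' : measurable Y') (Y'0 : nu Y' = 0) (subY : Yset `<=` Y').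

Definition Ks := Kset `\` orbit Y'.

Lemma mKs : measurable Ks.
Proof. apply: measurableD; [exact: mK | exact: morbit]. Qed.

Lemma Ks_sub : Ks `<=` B.
Proof. by move=> x [/K_sub]. Qed.

Lemma Ks_G x : Ks x -> Ks (G x).
Proof. by move=> [Kx nO]; split; [exact: K_G | move/orbit_G]. Qed.

Lemma Ks_surj y : Ks y -> exists2 x, Ks x & G x = y.
Proof.
move=> [Ky nO]; have [x [Kx Gx xE]] := K_surj Ky.
exists x => //; split => // H; apply: nO.
by move: H; rewrite xE => /orbit_ginv.
Qed.

Lemma Ks_img : G @` Ks = Ks.
Proof.
apply/seteqP; split => y.
- by move=> [x Kx <-]; exact: Ks_G.
- by move=> /Ks_surj [x Kx Gx]; exists x.
Qed.

Lemma Ks_inj : {in Ks &, injective G}.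
Proof.
move=> x x' /[!inE] Kx Kx' Gxx'.
have [Nxx'|Nxx'] := eqVneq (N x) (N x').
  have : iter (N x) g x = iter (N x) g x' by rewrite {2}Nxx'; exact: Gxx'.
  by move/(congr1 (iter (N x) ginv)); rewrite !iterK.
exfalso; case: Kx' => Kx'0 nO; apply: nO; apply: orbit_self; apply: subY.
exists (N x) => //; exists (N x') => //; rewrite (negbTE Nxx').
split; first by split => //; split => //; exact: K_sub.
rewrite /= -[iter (N x') g x']/(G x') -Gxx' /induced_map iterK.
by case: Kx => Kx _; split => //; split => //; exact: K_sub.
Qed.

Lemma Ks_mfun : measurable_fun Ks G.
Proof. by move=> _ C mC; apply: mGpre => //; [exact: mKs | exact: Ks_sub]. Qed.

Lemma Ks_mimg A : measurable A -> A `<=` Ks -> measurable (G @` A).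
Proof.
by move=> mA AK; apply: mGimg => //; apply: subset_trans AK _; exact: Ks_sub.
Qed.

Lemma Ks_pres_img A : measurable A -> A `<=` Ks -> nu (G @` A) = nu A.
Proof.
move=> mA AK; have AB : A `<=` B by apply: subset_trans AK _; exact: Ks_sub.
rewrite Gimg_eq // measure_semi_bigcup //.
- rewrite (measure_split_Bn mA AB); apply: eq_eseriesr => n _.
  by rewrite /= pres_iter_ginv //; apply: measurableI => //; exact: mBn.
- by move=> n; apply: mpre_iter_ginv; apply: measurableI => //; exact: mBn.
- move=> i j _ _ [y [/= [Ai [_ /= Ni]] [Aj [_ /= Nj]]]].
  have : iter i ginv y = iter j ginv y.
    apply: Ks_inj; rewrite ?inE; [exact: AK|exact: AK|].
    by rewrite /induced_map Ni Nj !iterKV.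
  by move=> E; rewrite -Ni E Nj.
- apply: bigcupT_measurable => n; apply: mpre_iter_ginv.
  by apply: measurableI => //; exact: mBn.
Qed.

Lemma Ks_pres_pre A : measurable A -> A `<=` Ks ->
  nu (Ks `&` G @^-1` A) = nu A.
Proof.
move=> mA AK.
have mC : measurable (Ks `&` G @^-1` A).
  by apply: mGpre => //; [exact: mKs | exact: Ks_sub].
rewrite -(Ks_pres_img mC); last by move=> x [].
congr (nu _); apply/seteqP; split => y.
- by move=> [x [_ /= Ax] <-].
- by move=> Ay; have [x Kx Gx] := Ks_surj (AK _ Ay); exists x => //; split => //=; rewrite Gx.
Qed.


Lemma img_iter_ginv n A : iter n ginv @` A = iter n g @^-1` A.
Proof.
apply/seteqP; split => x /=.
  by move=> [y Ay <-]; rewrite iterKV.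
by move=> Ax; exists (iter n g x) => //; rewrite iterK.
Qed.

Lemma mO : measurable (zorbit_set g ginv B).
Proof.
apply: bigcupT_measurable => n; apply: measurableU.
- by rewrite img_iter_g; exact: mpre_iter_ginv.
- by rewrite img_iter_ginv; exact: mpre_iter_g.
Qed.

Definition Tset := \bigcup_i (iter i ginv @^-1` (Bgt i `&` Ks)).

Lemma mT : measurable Tset.
Proof.
apply: bigcupT_measurable => i; apply: mpre_iter_ginv.
apply: measurableI; [exact: mBgt | exact: mKs].
Qed.

Lemma O_cover : zorbit_set g ginv B `<=` Tset `|` (orbit S `|` orbit Y').
Proof.
move=> z Oz.
have [h|nS] := pselect (orbit S z); first by right; left.
have [h|nY] := pselect (orbit Y' z); first by right; right.
left.
have [i [Bpi iN]] := cover Oz (fun H => nS (orbit_mono sub1 H))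
  (fun H => nS (orbit_mono sub2 H)) (fun H => nS (orbit_mono sub3 H)).
exists i => //=; split.
  by split => //; exact: Bp_sub.
split; first (split => //; move/orbit_ginv; exact: nS).
by move/orbit_ginv; exact: nY.
Qed.

Lemma orbit0 S' : measurable S' -> nu S' = 0 -> nu (orbit S') = 0.
Proof.
move=> mS' S'0; apply/(negligibleP _ (morbit mS')).
by apply: orbit_negl; exists S'; split.
Qed.

Lemma int_ge :
  (nu (zorbit_set g ginv B) <= \int[nu]_(x in Ks) ((N x)%:R : R)%:E)%E.
Proof.
rewrite -sum_Bgt_int; [|exact: mKs|exact: Ks_sub].
have mZ : measurable (orbit S `|` orbit Y') by apply: measurableU; exact: morbit.
apply: (le_trans (le_measure _ _ _ O_cover)); rewrite ?inE.
- exact: mO.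
- exact: measurableU mT mZ.
apply: (le_trans (measureU2 _ mT mZ)).
have hZ : (nu (orbit S `|` orbit Y') <= 0)%E.
  apply: (le_trans (measureU2 _ _ _)).
  - exact: morbit.
  - exact: morbit.
  apply: (le_trans (leeD (_ : _ <= 0) (_ : _ <= 0))%E); last by rewrite adde0.
  - by rewrite measure_le0; apply/eqP; exact: orbit0.
  - by rewrite measure_le0; apply/eqP; exact: orbit0.
apply: (le_trans (leeD2l (nu Tset) hZ)).
rewrite adde0.
have mF : forall i, measurable (iter i ginv @^-1` (Bgt i `&` Ks)).
  by move=> i; apply: mpre_iter_ginv; apply: measurableI; [exact: mBgt|exact: mKs].
apply: (le_trans (measure_sigma_subadditive _ mF mT _)).
  by [].
apply: lee_nneseries => // i _.
rewrite /= pres_iter_ginv //; apply: measurableI; [exact: mBgt|exact: mKs].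
Qed.

Lemma Ks_pos : (0 < nu B)%E -> (0 < nu Ks)%E.
Proof.
move=> hBpos; rewrite lt0e measure_ge0 andbT; apply/negP => /eqP K0.
have hs : (\sum_(i <oo) nu (Bgt i `&` Ks) = 0)%E.
  apply: eseries0 => i _ _; apply/eqP; rewrite -measure_le0 -K0.
  apply: le_measure; rewrite ?inE; [|exact: mKs|by move=> x []].
  apply: measurableI; [exact: mBgt|exact: mKs].
have := int_ge; rewrite -sum_Bgt_int; [|exact: mKs|exact: Ks_sub].
rewrite hs => hle.
have : (nu B <= nu (zorbit_set g ginv B))%E.
  apply: le_measure; rewrite ?inE; [exact: hB|exact: mO|].
  by move=> x Bx; exists 0%N => //; left; exists x.
move=> /le_trans/(_ hle); rewrite leNgt hBpos.
by [].
Qed.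

End Final2.
End Final.


Lemma main_exists
  (hret : {ae nu, forall x, B x -> B (induced_map g N x)})
  (hint : (\int[nu]_(x in B) ((N x)%:R : R)%:E < +oo)%E)
  (hBpos : (0 < nu B)%E) :
  exists B' : set X,
    [/\ measurable B' /\ B' `<=` B,
        (0 < nu B')%E,
        induced_map g N @` B' = B',
        [/\ {in B' &, injective (induced_map g N)},
            measurable_fun B' (induced_map g N),
            (forall A, measurable A -> A `<=` B' ->
               measurable (induced_map g N @` A)),
            (forall A, measurable A -> A `<=` B' ->
               nu (B' `&` induced_map g N @^-1` A) = nu A) &
            (forall A, measurable A -> A `<=` B' ->
               nu (induced_map g N @` A) = nu A)] &
        (nu (zorbit_set g ginv B) <= \int[nu]_(x in B') ((N x)%:R : R)%:E)%E].
Proof.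
have : nu.-negligible (B `\` B0 `|` W0 `|` Lsup).
  apply: negligibleU; last exact: Lsup_negl.
  apply: negligibleU; [exact: BB0_negl | exact: W0_negl].
case=> S [mS S0 subS].
have sub1 : B `\` B0 `<=` S by move=> x h; apply: subS; left; left.
have sub2 : W0 `<=` S by move=> x h; apply: subS; left; right.
have sub3 : Lsup `<=` S by move=> x h; apply: subS; right.
have [Y' [mY' Y'0 subY]] : nu.-negligible (Yset S).
  by apply: Y_negl.
exists (Ks S Y'); split.
- split; [apply: mKs => // | apply: Ks_sub => //].
- by apply: Ks_pos.
- by apply: Ks_img.
- split.
  + by apply: Ks_inj.
  + by apply: Ks_mfun.
  + by move=> A mA AK; exact: (Ks_mimg mA AK).
  + move=> A mA AK; exact: (Ks_pres_pre mS sub3 mY' subY mA AK).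
  + move=> A mA AK; exact: (Ks_pres_img subY mA AK).
- exact: (int_ge mS S0 sub1 sub2 sub3 mY' Y'0).
Qed.

End Kernel.

Theorem theorem3p2 (d : measure_display) (X : measurableType d) (R : realType)
  (nu : probability X R) (g ginv : X -> X)
  (* g is invertible, bimeasurable and measure preserving *)
  (hgK : cancel g ginv) (hginvK : cancel ginv g)
  (hgm : measurable_fun setT g) (hginvm : measurable_fun setT ginv)
  (hgpres : forall A, measurable A -> nu (g @^-1` A) = nu A)
  (* no periodic points *)
  (hnoper : forall (x : X) (n : nat), (0 < n)%N -> iter n g x <> x)
  (B : set X) (hB : measurable B) (hBpos : (0 < nu B)%E)
  (N : X -> nat) (hNpos : forall x, B x -> (0 < N x)%N)
  (hNm : measurable_fun B N)
  (hret : {ae nu, forall x, B x -> B (induced_map g N x)})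
  (hint : (\int[nu]_(x in B) ((N x)%:R : R)%:E < +oo)%E) :
  exists B' : set X,
    [/\ measurable B' /\ B' `<=` B,
        (0 < nu B')%E,
        induced_map g N @` B' = B',
        (* g_* = induced map restricted to B' is invertible and nu-preserving *)
        [/\ {in B' &, injective (induced_map g N)},
            measurable_fun B' (induced_map g N),
            (forall A, measurable A -> A `<=` B' ->
               measurable (induced_map g N @` A)),
            (forall A, measurable A -> A `<=` B' ->
               nu (B' `&` induced_map g N @^-1` A) = nu A) &
            (forall A, measurable A -> A `<=` B' ->
               nu (induced_map g N @` A) = nu A)] &
        (nu (zorbit_set g ginv B) <= \int[nu]_(x in B') ((N x)%:R : R)%:E)%E].
Proof.
by apply: main_exists.
Qed.
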